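(* Let $n$ and $k$ be nonnegative integers with $k\le n$. Then $$\sum_{m=k}^{n}\binom{n}{m}\binom{m+2k}{3k}(-1)^{m-k}=(-1)^{n-k}\binom{2k}{n-k}.$$
   Context: Binomial coefficients $\binom{a}{b}$ for nonnegative integers $a,b$ are the usual ones, with $\binom{a}{b}=0$ when $b>a$. *)

(* Defs.v *)
From mathcomp Require Import all_boot all_order all_algebra.

(* Main.v *)
Require Import Defs.
From mathcomp Require Import all_boot all_order all_algebra.
From mathcomp Require Import zify ring.
Import GRing.Theory.
Local Open Scope ring_scope.

Lemma trin n m i : (i <= m)%N -> (m <= n)%N ->
  ('C(n,m)*'C(m,i) = 'C(n,i)*'C(n-i,m-i))%N.
Proof.
move=> him hmn.
have hf : (0 < i`! * (m-i)`! * (n-m)`!)%N by rewrite !muln_gt0 !fact_gt0.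
apply/eqP; rewrite -(eqn_pmul2r hf); apply/eqP.
have e1 : ('C(n,m)*'C(m,i) * (i`! * (m-i)`! * (n-m)`!) = n`!)%N.
  by rewrite -(bin_fact hmn) -(bin_fact him); ring.
have e2 : ('C(n,i)*'C(n-i,m-i) * (i`! * (m-i)`! * (n-m)`!) = n`!)%N.
  have h1 : (m - i <= n - i)%N by lia.
  have h2 : (n - i - (m - i) = n - m)%N by lia.
  rewrite -(bin_fact (leq_trans him hmn)) -(bin_fact h1) h2; ring.
by rewrite e1 e2.
Qed.

Lemma alt (N : nat) : \sum_(j < N.+1) ('C(N,j)%:R * (-1)^+j : int) = (N == 0%N)%:R.
Proof.
have := exprD1n (-1 : int) N; rewrite addNr expr0n => ->.
by apply: eq_bigr => j _; rewrite mulrC mulr_natr.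
Qed.

Lemma inner n i : \sum_(m < n.+1) (('C(n,m)*'C(m,i))%:R * (-1)^+m : int)
  = (i == n)%:R * (-1)^+n.
Proof.
case: (leqP i n) => hin; last first.
  rewrite big1 ?(gtn_eqF hin) ?mul0r // => m _.
  by rewrite (@bin_small m i) ?muln0 ?mul0r //; have := ltn_ord m; lia.
rewrite -(big_mkord xpredT (fun m => (('C(n,m)*'C(m,i))%:R * (-1)^+m : int))) (@big_cat_nat _ _ _ i 0 n.+1) ?leqW //= big1_seq ?add0r; last first.
  move=> m /andP[_]; rewrite mem_index_iota => /andP[_ hm].
  by rewrite (bin_small hm) muln0 mul0r.
rewrite -{1}(add0n i) big_addn.
rewrite (eq_big_nat _ _ (F2 := fun j => ('C(n,i))%:R * (-1)^+i * ('C(n-i,j)%:R * (-1)^+j))); last first.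
  move=> j /andP[_ hj]; rewrite trin ?leq_addl //; last by lia.
  by rewrite addnK natrM exprD; ring.
rewrite -big_distrr /= big_mkord.
have -> : (n.+1 - i = (n - i).+1)%N by lia.
rewrite alt.
case: (eqVneq i n) => [->|hne].
  by rewrite subnn binn /= !mul1r mulr1.
have -> : (n - i == 0)%N = false by apply/negbTE; lia.
by rewrite !mulr0 mul0r.
Qed.

Theorem lemma4p1 (n k : nat) (hk : (k <= n)%N) :
  \sum_(k <= m < n.+1) (('C(n, m) * 'C(m + 2 * k, 3 * k))%:R * (-1) ^+ (m - k) : int)
  = (-1) ^+ (n - k) * ('C(2 * k, n - k))%:R.
Proof.
have S1 : \sum_(k <= m < n.+1) (('C(n, m) * 'C(m + 2 * k, 3 * k))%:R * (-1) ^+ (m - k) : int)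
  = (-1)^+k * \sum_(m < n.+1) (('C(n, m) * 'C(m + 2 * k, 3 * k))%:R * (-1) ^+ m).
  rewrite -(big_mkord xpredT (fun m => (('C(n, m) * 'C(m + 2 * k, 3 * k))%:R * (-1) ^+ m : int))).
  rewrite (@big_cat_nat _ _ _ k 0 n.+1) ?leqW //= [X in _ = _ * (X + _)]big1_seq ?add0r; last first.
    move=> m /andP[_]; rewrite mem_index_iota => /andP[_ hm].
    by rewrite (@bin_small (m + 2 * k)) ?muln0 ?mul0r //; lia.
  rewrite big_distrr /=; apply: eq_big_nat => m /andP[hm _].
  by rewrite -signr_odd oddB // signr_addb !signr_odd; ring.
have S2 : forall m, 'C(m + 2 * k, 3 * k) = (\sum_(i < (3*k).+1) 'C(m, i) * 'C(2*k, 3*k - i))%N.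
  by move=> m; rewrite binomial.Vandermonde.
rewrite S1.
under eq_bigr => m _ do rewrite S2 big_distrr natr_sum big_distrl /=.
rewrite exchange_big /=.
under eq_bigr => i _ do (under eq_bigr => m _ do rewrite mulnA mulnC natrM -mulrA; rewrite -big_distrr /= inner).
rewrite -[(-1)^+(n-k)]signr_odd oddB // signr_addb !signr_odd.
case: (leqP n (3*k)) => h3.
  rewrite (bigD1 (Ordinal (h3 : (n < (3*k).+1)%N))) //= big1 ?addr0; last first.
    by move=> i /eqP hi; rewrite (_ : ((i : nat) == n) = false) ?mul0r ?mulr0 //; apply/negbTE/eqP => e; apply: hi; apply: val_inj; exact: e.
  rewrite eqxx mul1r -(bin_sub (n := 2 * k) (m := n - k)); last by lia.
  have -> : (2 * k - (n - k) = 3 * k - n)%N by lia.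
  ring.
rewrite big1 ?mulr0; last first.
  move=> i _; rewrite (_ : ((i : nat) == n) = false) ?mul0r ?mulr0 //; apply/negbTE.
  have := ltn_ord i; lia.
by rewrite bin_small ?mulr0 //; lia.
Qed.
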